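(* Let $n\ge 1$ and let $\mathcal{E}$ be a probability distribution (ensemble) over $n$-qubit unitaries (quantum circuits) $C$ that is well-spread, i.e. there is a constant $\gamma$ (independent of $n$) such that $$\mathbb{E}_{C\sim\mathcal{E}}\big[\pi_C\big]\le \frac{\gamma}{2^n}.$$ For $\delta\in(0,1]$, let $P_\delta$ denote the probability that a circuit $C\sim\mathcal{E}$ is $\delta$-peaked. Then $$P_\delta = O\!\left(\frac{1}{\delta^{2}\,2^{n}}\right).$$
   Context: For an $n$-qubit unitary $C$, let $p_C[s]=|\langle s|C|0^n\rangle|^2$ for $s\in\{0,1\}^n$ be its output distribution when applied to $|0^n\rangle$ and measured in the computational basis. The collision probability of $C$ is $\pi_C:=\sum_{s\in\{0,1\}^n}p_C[s]^2$. Given $\delta\in(0,1]$, $C$ is called $\delta$-peaked if $\max_{s\in\{0,1\}^n}|\langle s|C|0^n\rangle|^2\ge\delta$. The constant implicit in the $O(\cdot)$ may depend on $\gamma$. *)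

(* Defs.v *)
From HB Require Import structures.
From mathcomp Require Import all_boot all_order all_algebra.
From mathcomp Require Import all_classical all_reals all_analysis.
From mathcomp.real_closed Require Import complex.

Set Implicit Arguments.
Unset Strict Implicit.
Unset Printing Implicit Defensive.

Import Order.TTheory GRing.Theory Num.Theory.
Local Open Scope ring_scope.

(* Computational basis states of n qubits are indexed by 'I_(2^n)
   (binary encoding of bitstrings s in {0,1}^n); index 0 is |0^n>. *)

Section Quantum.
Variable R : realType.
Variable n : nat.

Definition ket0 : 'I_(2 ^ n) := Ordinal (expn_gt0 2 n).

Definition adjmx (C : 'M[R[i]]_(2 ^ n)) : 'M[R[i]]_(2 ^ n) :=
  (map_mx (@conjc R) C)^T.

Definition unitary (C : 'M[R[i]]_(2 ^ n)) : Prop :=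
  adjmx C *m C = 1%:M.

Definition sqnorm (z : R[i]) : R := complex.Re z ^+ 2 + complex.Im z ^+ 2.

Definition outp (C : 'M[R[i]]_(2 ^ n)) (s : 'I_(2 ^ n)) : R :=
  sqnorm (C s ket0).

Definition collision (C : 'M[R[i]]_(2 ^ n)) : R :=
  \sum_(s < 2 ^ n) outp C s ^+ 2.

Definition peaked (C : 'M[R[i]]_(2 ^ n)) (delta : R) : Prop :=
  delta <= \big[Num.max/0]_(s < 2 ^ n) outp C s.
End Quantum.

(* Main.v *)
Require Import Defs.
From HB Require Import structures.
From mathcomp Require Import all_boot all_order all_algebra.
From mathcomp Require Import all_classical all_reals all_analysis.
From mathcomp.real_closed Require Import complex.

Import Order.TTheory GRing.Theory Num.Theory.
Local Open Scope ring_scope.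
Local Open Scope classical_set_scope.

Theorem theorem1 (R : realType) (gamma : R) :
  exists K : R,
  forall (n : nat), (1 <= n)%N ->
  forall (d : measure_display) (T : measurableType d) (P : probability T R)
         (U : T -> 'M[R[i]]_(2 ^ n)),
    (forall t, unitary (U t)) ->
    (forall s : 'I_(2 ^ n), measurable_fun setT (fun t => outp (U t) s)) ->
    (\int[P]_t (collision (U t))%:E <= (gamma / (2 ^+ n)%:R)%:E)%E ->
    forall delta : R, 0 < delta -> delta <= 1 ->
      (P [set t | peaked (U t) delta] <= (K / (delta ^+ 2 * (2 ^ n)%:R))%:E)%E.
Proof.
exists gamma => n _ d T P U _ hm hint delta d0 _.
set A := [set t | peaked (U t) delta].
have outp0 : forall t s, 0 <= outp (U t) s.
  by move=> t s; rewrite /outp /sqnorm addr_ge0 // sqr_ge0.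
have AE : A = \bigcup_(s in [set: 'I_(2 ^ n)]) [set t | delta <= outp (U t) s].
  apply/seteqP; split => t /=.
  - rewrite /peaked => /bigmax_geP [|[s _ hs]].
      by rewrite leNgt d0.
    by exists s.
  - move=> [s _ hs]; rewrite /peaked; apply/bigmax_geP; right; by exists s.
have mA : measurable A.
  rewrite AE; apply: fin_bigcup_measurable; first exact: finite_finset.
  move=> s _.
  have mb := measurable_realfun.measurable_fun_ler (measurable_cst delta) (hm s).
  have := mb measurableT [set true] I.
  rewrite setTI => H. exact H.
have mcol : measurable_fun setT (fun t => collision (U t)).
  rewrite /collision; apply: measurable_sum => s.
  exact: measurable_realfun.measurable_funX.
have key : ((delta ^+ 2)%:E * P A <= \int[P]_t (collision (U t))%:E)%E.
  rewrite -(setIT A) -integral_indic //.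
  rewrite -(@integralZl_indic _ _ _ _ _ _ (fun _ => A)) //; last first.
    by rewrite ltNge sqr_ge0.
  apply: ge0_le_integral => //.
  - by move=> t _; rewrite lee_fin mulr_ge0 ?sqr_ge0.
  - apply/measurable_realfun.measurable_EFinP; apply: measurable_realfun.measurable_funM => //.
  - by apply/measurable_realfun.measurable_EFinP.
  - move=> t _; rewrite lee_fin /indic.
    case: (boolP (t \in A)) => tA /=; last by rewrite mulr0 sumr_ge0 // => s _; rewrite sqr_ge0.
    rewrite mulr1; move: tA; rewrite inE AE => -[s _ /= hs].
    rewrite /collision (bigD1 s) //= -[X in X <= _]addr0 lerD //.
    + by rewrite ler_sqr // ?nnegrE ?outp0 // ltW.
    + by rewrite sumr_ge0 // => j _; rewrite sqr_ge0.
have PAfin : P A = (fine (P A))%:E by rewrite fineK // fin_num_measure.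
have e2 : (2 ^+ n)%N = (2 ^ n)%N by elim: n {U hm hint A mA AE outp0 PAfin key mcol} => // n IH; rewrite exprS expnS IH.
move: (le_trans key hint); rewrite PAfin -EFinM !lee_fin e2 => h.
have p2 : (0 : R) < (2 ^ n)%:R by rewrite ltr0n expn_gt0.
rewrite invfM mulrA mulrAC ler_pdivlMr ?exprn_gt0 // mulrC.
exact: h.
Qed.
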